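(* Let $E$ be a separable Banach space over $K$ and $G$ a compact $D$-submodule of $E$. If $X$ is an $E$-valued random variable whose law is normalised Haar measure on $G$, then $X$ is $K$-Gaussian and $G=\{x\in E:|T(x)|\le\|T(X)\|_\infty\ \text{for all }T\in E^*\}$.
   Context: $K$ is a local field (locally compact, non-discrete, totally disconnected topological field) with its non-archimedean absolute value $|\cdot|$ ($|x|=0\iff x=0$, $|xy|=|x||y|$, $|x+y|\le|x|\vee|y|$); $D=\{x\in K:|x|\le1\}$. A normed space over $K$ is a $K$-vector space $E$ with $\|\cdot\|:E\to[0,\infty)$, $\|x\|=0\iff x=0$, $\|\alpha x\|=|\alpha|\|x\|$, $\|x+y\|\le\|x\|\vee\|y\|$; a Banach space if complete. $E^*$ is the space of continuous $K$-linear functionals $E\to K$. For a $K$-valued random variable $Y$, $\|Y\|_\infty$ is the essential supremum of $|Y|$. $K^2$ is normed by $|(x_1,x_2)|=|x_1|\vee|x_2|$; $v_1,v_2\in K^2$ are orthonormal if $|v_1|=|v_2|=1$ and $|\alpha_1v_1+\alpha_2v_2|=|\alpha_1|\vee|\alpha_2|$ for all $\alpha_i\in K$. An $E$-valued random variable $X$ is $K$-Gaussian if whenever $X_1,X_2$ are independent copies of $X$ and $(\alpha_{11},\alpha_{12}),(\alpha_{21},\alpha_{22})\in K^2$ are orthonormal, $(\alpha_{11}X_1+\alpha_{12}X_2,\alpha_{21}X_1+\alpha_{22}X_2)$ has the same law as $(X_1,X_2)$. *)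

(* Defs.v *)
From HB Require Import structures.
From mathcomp Require Import all_boot all_order all_algebra.
From mathcomp Require Import all_classical all_reals all_analysis ess_sup_inf.
Set Implicit Arguments. Unset Strict Implicit. Unset Printing Implicit Defensive.
Import Order.TTheory GRing.Theory Num.Theory.
Local Open Scope classical_set_scope.
Local Open Scope ring_scope.

Section Metric.
Variables (R : realType) (T : Type) (d : T -> T -> R).

Definition mopen (U : set T) : Prop :=
  forall x, U x -> exists r : R, 0 < r /\ forall y, d x y < r -> U y.

Definition mborel : set (set T) := <<s mopen >>.

Definition mcompact (C : set T) : Prop :=
  forall F : set (set T), F `<=` mopen -> C `<=` \bigcup_(U in F) U ->
  exists s : seq (set T), (forall U, U \in s -> F U) /\
    C `<=` (fun x => exists2 U, U \in s & U x).

Definition mlocally_compact : Prop :=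
  forall x, exists C, mcompact C /\ exists r : R, 0 < r /\ forall y, d x y < r -> C y.

Definition mnondiscrete : Prop := ~ (forall x, mopen [set x]).

Definition mconnected (A : set T) : Prop :=
  forall U V, mopen U -> mopen V -> A `<=` U `|` V -> A `&` U `&` V = set0 ->
  A `&` U = set0 \/ A `&` V = set0.

Definition mtotally_disconnected : Prop :=
  forall A, mconnected A -> forall x y, A x -> A y -> x = y.

Definition mcomplete : Prop :=
  forall u : nat -> T,
    (forall e : R, 0 < e -> exists N, forall m n, (N <= m)%N -> (N <= n)%N -> d (u m) (u n) < e) ->
    exists l, forall e : R, 0 < e -> exists N, forall n, (N <= n)%N -> d (u n) l < e.

Definition mseparable : Prop :=
  exists u : nat -> T, forall x (e : R), 0 < e -> exists n, d x (u n) < e.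
End Metric.

Definition nonarch_abs (R : realType) (K : fieldType) (a : K -> R) : Prop :=
  [/\ forall x, 0 <= a x,
      forall x, a x = 0 <-> x = 0,
      forall x y, a (x * y) = a x * a y &
      forall x y, a (x + y) <= Num.max (a x) (a y)].

Definition distK (R : realType) (K : fieldType) (a : K -> R) (x y : K) : R := a (x - y).

Definition local_field (R : realType) (K : fieldType) (a : K -> R) : Prop :=
  [/\ nonarch_abs a, mlocally_compact (distK a), mnondiscrete (distK a) &
      mtotally_disconnected (distK a)].

Definition unit_ball (R : realType) (K : fieldType) (a : K -> R) : set K := [set x | a x <= 1].

Definition ultranorm (R : realType) (K : fieldType) (a : K -> R) (E : lmodType K) (n : E -> R) : Prop :=
  [/\ forall x, 0 <= n x,
      forall x, n x = 0 <-> x = 0,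
      forall (c : K) x, n (c *: x) = a c * n x &
      forall x y, n (x + y) <= Num.max (n x) (n y)].

Definition distE (R : realType) (K : fieldType) (E : lmodType K) (n : E -> R) (x y : E) : R := n (x - y).

Definition distE2 (R : realType) (K : fieldType) (E : lmodType K) (n : E -> R) (p q : E * E) : R :=
  Num.max (n (p.1 - q.1)) (n (p.2 - q.2)).

Definition banach (R : realType) (K : fieldType) (a : K -> R) (E : lmodType K) (n : E -> R) : Prop :=
  ultranorm a n /\ mcomplete (distE n).

Definition D_submodule (R : realType) (K : fieldType) (a : K -> R) (E : lmodType K) (G : set E) : Prop :=
  [/\ G 0, forall x y, G x -> G y -> G (x + y) &
      forall (c : K) x, unit_ball a c -> G x -> G (c *: x)].

Definition dual_elt (R : realType) (K : fieldType) (a : K -> R) (E : lmodType K) (n : E -> R)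
  (T : E -> K) : Prop :=
  (forall (c : K) x y, T (c *: x + y) = c * T x + T y) /\
  (forall x (e : R), 0 < e -> exists2 del : R, 0 < del &
      forall y, n (x - y) < del -> a (T x - T y) < e).

Section RV.
Variables (R : realType) (K : fieldType) (E : lmodType K) (n : E -> R).

Definition rvE (d : measure_display) (O : measurableType d) (X : O -> E) : Prop :=
  forall B, mborel (distE n) B -> measurable (X @^-1` B).

Definition same_law (d : measure_display) (O : measurableType d) (P : probability O R) (X : O -> E)
  (d' : measure_display) (O' : measurableType d') (P' : probability O' R) (Y : O' -> E) : Prop :=
  forall B, mborel (distE n) B -> P (X @^-1` B) = P' (Y @^-1` B).

Definition indepE (d : measure_display) (O : measurableType d) (P : probability O R)
  (X1 X2 : O -> E) : Prop :=
  forall A B, mborel (distE n) A -> mborel (distE n) B ->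
    P (X1 @^-1` A `&` X2 @^-1` B) = (P (X1 @^-1` A) * P (X2 @^-1` B))%E.

(* the law of X is the normalised Haar measure on the compact group G:
   a Borel probability measure carried by G and invariant under translations by G *)
Definition law_is_haar (d : measure_display) (O : measurableType d) (P : probability O R)
  (X : O -> E) (G : set E) : Prop :=
  P (X @^-1` G) = 1%E /\
  forall g, G g -> forall B, mborel (distE n) B ->
    P (X @^-1` [set x | B (x - g)]) = P (X @^-1` B).
End RV.

Definition orthonormal (R : realType) (K : fieldType) (a : K -> R) (v1 v2 : K * K) : Prop :=
  Num.max (a v1.1) (a v1.2) = 1 /\ Num.max (a v2.1) (a v2.2) = 1 /\
  forall c1 c2 : K,
    Num.max (a (c1 * v1.1 + c2 * v2.1)) (a (c1 * v1.2 + c2 * v2.2)) = Num.max (a c1) (a c2).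

Definition K_gaussian (R : realType) (K : fieldType) (a : K -> R) (E : lmodType K) (n : E -> R)
  (d : measure_display) (O : measurableType d) (P : probability O R) (X : O -> E) : Prop :=
  forall (d' : measure_display) (O' : measurableType d') (P' : probability O' R) (X1 X2 : O' -> E),
    rvE n X1 -> rvE n X2 -> same_law n P X P' X1 -> same_law n P X P' X2 -> indepE n P' X1 X2 ->
    forall a11 a12 a21 a22 : K, orthonormal a (a11, a12) (a21, a22) ->
    forall C, mborel (distE2 n) C ->
      P' ((fun w => (a11 *: X1 w + a12 *: X2 w, a21 *: X1 w + a22 *: X2 w)) @^-1` C) =
      P' ((fun w => (X1 w, X2 w)) @^-1` C).

(* Main.v *)
From Pilot Require Import Defs.
From HB Require Import structures.
From mathcomp Require Import all_boot all_order all_algebra.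
From mathcomp Require Import all_classical all_reals all_analysis ess_sup_inf.
From mathcomp Require Import ring lra.
Set Implicit Arguments. Unset Strict Implicit. Unset Printing Implicit Defensive.
Import Order.TTheory GRing.Theory Num.Theory.
Local Open Scope classical_set_scope.
Local Open Scope ring_scope.

Section AbsK.
Variables (R : realType) (K : fieldType) (a : K -> R) (ha : nonarch_abs a).

Lemma a_ge0 x : 0 <= a x. Proof. by case: ha. Qed.
Lemma a_eq0 x : a x = 0 <-> x = 0. Proof. by case: ha. Qed.
Lemma aM x y : a (x * y) = a x * a y. Proof. by case: ha. Qed.
Lemma aD x y : a (x + y) <= Num.max (a x) (a y). Proof. by case: ha. Qed.
Lemma a0 : a 0 = 0. Proof. exact/a_eq0. Qed.
Lemma a_neq0 {x} : x != 0 -> a x != 0.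
Proof. by move=> /eqP h; apply/eqP => /a_eq0. Qed.
Lemma a1 : a 1 = 1.
Proof.
have h := aM 1 1; rewrite mulr1 in h.
apply: (mulfI (a_neq0 (oner_neq0 K))); by rewrite mulr1 -h.
Qed.
Lemma aN1 : a (-1) = 1.
Proof.
have h := aM (-1) (-1); rewrite mulrNN mulr1 a1 in h.
have := a_ge0 (-1); nra.
Qed.
Lemma aN x : a (- x) = a x. Proof. by rewrite -mulN1r aM aN1 mul1r. Qed.
Lemma aB x y : a (x - y) = a (y - x). Proof. by rewrite -opprB aN. Qed.
Lemma aV x : x != 0 -> a (x^-1) = (a x)^-1.
Proof.
move=> x0; have h : a x * a x^-1 = 1 by rewrite -aM divff // a1.
apply: (mulfI (a_neq0 x0)); by rewrite h mulfV // a_neq0.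
Qed.
Lemma a_gt0 {x} : x != 0 -> 0 < a x.
Proof. by move=> x0; rewrite lt_def a_neq0 // a_ge0. Qed.
Lemma aD' x y : a (x + y) <= a x \/ a (x + y) <= a y.
Proof. by have := aD x y; rewrite le_max => /orP. Qed.
Lemma a_iso x y : a x < a y -> a (x + y) = a y.
Proof.
move=> h; have h2 := aD' (x + y) (- x).
rewrite [x + y]addrC addrK aN addrC in h2.
have [h1|h1] := aD' x y; case: h2 => h2; lra.
Qed.
Lemma a_tri x y z : a (x - z) <= Num.max (a (x - y)) (a (y - z)).
Proof. by have := aD (x - y) (y - z); rewrite addrA subrK. Qed.
Lemma a_tri' x y z : a (x - z) <= a (x - y) \/ a (x - z) <= a (y - z).
Proof. by have := a_tri x y z; rewrite le_max => /orP. Qed.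
End AbsK.

Lemma inS (T : eqType) (x y : T) (s : seq T) : x \in s -> x \in y :: s.
Proof. by rewrite in_cons => ->; rewrite orbT. Qed.

Section Cpt.
Variables (R : realType) (T : Type) (d : T -> T -> R).

Lemma mcompact_closed_sub C A : mcompact d C -> A `<=` C -> mopen d (~` A) ->
  mcompact d A.
Proof.
move=> cC AC oA F Fo AF.
have h1 : F `|` [set ~` A] `<=` mopen d by move=> U [/Fo|->].
have h2 : C `<=` \bigcup_(U in F `|` [set ~` A]) U.
  move=> x Cx; have [/AF [U FU Ux]|nAx] := pselect (A x).
    by exists U => //; left.
  by exists (~` A) => //; right.
have [s [hs Cs]] := cC _ h1 h2.
exists [seq U <- s | `[< F U >]]; split.
  by move=> U; rewrite mem_filter => /andP [/asboolP].
move=> x Ax; have [U Us Ux] := Cs x (AC x Ax).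
exists U => //; rewrite mem_filter Us andbT; apply/asboolP.
by have := hs U Us => -[//|eU]; move: Ux; rewrite eU.
Qed.

Lemma mcompact_image (T2 : Type) (d2 : T2 -> T2 -> R) (f : T -> T2) A :
  (forall U, mopen d2 U -> mopen d (f @^-1` U)) -> mcompact d A ->
  mcompact d2 (f @` A).
Proof.
move=> fc cA F Fo AF.
pose F1 := [set f @^-1` U | U in F].
have h1 : F1 `<=` mopen d by move=> _ [U FU <-]; exact: fc (Fo _ FU).
have h2 : A `<=` \bigcup_(W in F1) W.
  move=> x Ax; have [U FU Ux] := AF (f x) (imageP f Ax).
  by exists (f @^-1` U) => //; exists U.
have [s [hs As]] := cA _ h1 h2.
pose g (W : set T) : set T2 :=
  match pselect (exists U, F U /\ W = f @^-1` U) with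
  | left h => projT1 (cid h) | right _ => setT end.
have gP W : F1 W -> F (g W) /\ W = f @^-1` (g W).
  move=> [U FU eU]; rewrite /g; case: pselect => [h|[]]; last by exists U.
  by case: (cid h) => V /= [FV ->].
exists (map g s); split.
  by move=> U /mapP [W Ws ->]; have [] := gP W (hs W Ws).
move=> _ [x Ax <-]; have [W Ws Wx] := As x Ax.
exists (g W); first exact: map_f.
by have [_ eW] := gP W (hs W Ws); move: Wx; rewrite {1}eW.
Qed.
End Cpt.

Section FieldK.
Variables (R : realType) (K : fieldType) (a : K -> R) (hK : local_field a).
Let ha : nonarch_abs a. Proof. by case: hK. Qed.

Definition cball (c : K) (r : R) := [set w | a (w - c) <= r].

Lemma small r : 0 < r -> exists z, z != 0 /\ a z < r.
Proof.
move=> r0; apply: contrapT => nz; case: hK => _ _ ND _; apply: ND => x y ->.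
exists r; split => // w hw; apply: contrapT => wx; apply: nz.
exists (x - w); split => //; rewrite subr_eq0 eq_sym; apply/eqP => //.
Qed.

Lemma cball_closed c rr : mopen (distK a) (~` cball c rr).
Proof.
move=> w /= hw; have hw' : rr < a (w - c) by rewrite ltNge; apply/negP.
exists (a (w - c) - rr); split; first by rewrite subr_gt0.
move=> y hy /= hyc; rewrite /distK in hy; rewrite /cball /= in hyc.
have := a_ge0 ha (y - c).
case: (a_tri' ha w y c) => h; lra.
Qed.

Lemma cball_compact c rr : mcompact (distK a) (cball c rr).
Proof.
case: hK => _ LC _ _; have [C [cC [r0 [r00 hC]]]] := LC 0.
set r' := Num.max rr 0 + 1.
have rr' : rr <= r' by rewrite /r'; have := le_max rr rr 0; rewrite lexx /= => h; lra.
have r'0 : 0 < r' by rewrite /r'; have := le_max 0 rr 0; rewrite lexx orbT => h; lra.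
have [z [z0 hz]] := small (divr_gt0 r00 r'0).
have hz' : a z * r' < r0 by rewrite -ltr_pdivlMr.
pose A := cball 0 (a z * rr).
have cA : mcompact (distK a) A.
  apply: (mcompact_closed_sub cC); last exact: cball_closed.
  move=> w; rewrite /A /cball /= subr0 => hw; apply: hC.
  rewrite /distK add0r (aN ha).
  have := a_ge0 ha z; nra.
pose phi w := c + w / z.
have -> : cball c rr = phi @` A.
  apply/seteqP; split.
  - move=> v hv; exists (z * (v - c)).
      rewrite /A /cball /= subr0 (aM ha); apply: ler_wpM2l => //; exact: a_ge0.
    by rewrite /phi [z * _]mulrC mulfK // addrC subrK.
  - move=> _ [w hw <-]; rewrite /cball /phi /= [c + _]addrC addrK (aM ha) (aV ha z0).
    rewrite ler_pdivrMr ?(a_gt0 ha z0) // mulrC.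
    by move: hw; rewrite /A /cball /= subr0.
apply: (mcompact_image _ cA) => U oU w Uw.
have [e [e0 he]] := oU _ Uw.
exists (e * a z); split; first by rewrite mulr_gt0 // (a_gt0 ha z0).
move=> y hy; apply: he; rewrite /distK /phi.
have -> : c + w / z - (c + y / z) = (w - y) / z.
  by rewrite mulrBl opprD addrACA subrr add0r.
rewrite (aM ha) (aV ha z0) ltr_pdivrMr ?(a_gt0 ha z0) //.
Qed.

Lemma discrete : exists p, 0 < a p < 1 /\ forall l, a l < 1 -> a l <= a p.
Proof.
suff [p [p1 hp]] : exists p, a p < 1 /\ forall l, a l < 1 -> a l <= a p.
  exists p; split => //; apply/andP; split => //.
  have [z [z0 hz]] := small ltr01; have := hp z hz; have := a_gt0 ha z0; lra.
apply: contrapT => H.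
have H' : forall p, a p < 1 -> exists l, a l < 1 /\ a p < a l.
  move=> p p1; apply: contrapT => nl; apply: H; exists p; split => // l l1.
  by rewrite leNgt; apply/negP => pl; apply: nl; exists l.
pose S := [set w | 1 <= a w]. pose UU l := [set w | a w < a l].
pose F := [set S] `|` [set U | exists2 l, a l < 1 & U = UU l].
have h1 : F `<=` mopen (distK a).
  move=> U [->|[l _ ->]].
  - move=> w /= hw; exists 1; split => // y hy /=; rewrite /distK in hy.
    have h := a_iso ha (x := y - w) (y := w); rewrite subrK (aB ha) in h.
    rewrite /S /= in hw *; rewrite h //; lra.
  - move=> w /= hw; rewrite /UU /= in hw *.
    exists (a l); split; first by have := a_ge0 ha w; lra.
    move=> y hy /=; rewrite /distK in hy.
    have h := aD' ha w (y - w); rewrite [w + _]addrC subrK (aB ha y w) in h.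
    by case: h => h; lra.
have h2 : cball 0 1 `<=` \bigcup_(U in F) U.
  move=> w; rewrite /cball /= subr0 => hw.
  case: (lerP 1 (a w)) => h; first by exists S => //; left.
  have [l [l1 hl]] := H' w h; exists (UU l); last by [].
  by right; exists l.
have [s [hs Cs]] := @cball_compact 0 1 _ h1 h2.
have key : forall s : seq (set K), (forall U, U \in s -> F U) ->
    exists w, a w < 1 /\ forall U, U \in s -> ~ U w.
  elim => [|U s' IH] hs'.
    by exists 0; rewrite (a0 ha); split.
  have [w [w1 hw]] := IH (fun V Vs => hs' V (inS _ Vs)).
  have := hs' U (mem_head U s') => -[->|[l l1 ->]].
  - exists w; split => // V; rewrite in_cons => /orP[/eqP->|/hw//].
    by rewrite /S /=; lra.
  - case: (lerP (a l) (a w)) => hl.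
    + exists w; split => // V; rewrite in_cons => /orP[/eqP->|/hw//].
      by rewrite /UU /=; lra.
    + exists l; split => // V; rewrite in_cons => /orP[/eqP->|Vs].
        by rewrite /UU /=; lra.
      have := hw V Vs; have := hs' V (inS _ Vs).
      by move=> -[->|[l' _ ->]]; rewrite /S /UU /=; lra.
have [w [w1 hw]] := key s hs.
have wc : cball 0 1 w by rewrite /cball /= subr0; lra.
have [U Us Uw] := Cs w wc.
exact: hw U Us Uw.
Qed.

Lemma sph (Q : K -> R -> Prop) : (forall c r, Q c r -> 0 <= r) ->
  (forall c1 r1 c2 r2, Q c1 r1 -> Q c2 r2 -> a (c1 - c2) <= Num.max r1 r2) ->
  exists t, forall c r, Q c r -> a (t - c) <= r.
Proof.
move=> Q0 QQ.
have [[c0 [r0 q0]]|nq] := pselect (exists c r, Q c r); last first.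
  by exists 0 => c r qcr; exfalso; apply nq; exists c, r.
apply: contrapT => H.
have H' : forall t, exists c r, Q c r /\ r < a (t - c).
  move=> t; apply: contrapT => nl; apply: H; exists t => c r q.
  by rewrite leNgt; apply/negP => h; apply: nl; exists c, r.
pose F := [set U | exists c r, Q c r /\ U = ~` cball c r].
have h1 : F `<=` mopen (distK a) by move=> U [c [r [_ ->]]]; exact: cball_closed.
have h2 : cball c0 r0 `<=` \bigcup_(U in F) U.
  move=> w _; have [c [r [q h]]] := H' w; exists (~` cball c r).
    by exists c, r.
  by rewrite /cball /= => hh; lra.
have [s [hs Cs]] := @cball_compact c0 r0 _ h1 h2.
have sub : forall c r c' r', a (c' - c) <= r -> r' <= r -> cball c' r' `<=` cball c r.
  by move=> c r c' r' h1' h2' w; rewrite /cball /= => hw; case: (a_tri' ha w c' c) => h; lra.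
have key : forall s : seq (set K), (forall U, U \in s -> F U) -> exists c r,
    [/\ Q c r, cball c r `<=` cball c0 r0 & forall U, U \in s -> forall w, cball c r w -> ~ U w].
  elim => [|U s' IH] hs'.
    by exists c0, r0; split.
  have [c [r [q sb hw]]] := IH (fun V Vs => hs' V (inS _ Vs)).
  have := hs' U (mem_head U s') => -[c' [r' [q' ->]]].
  case: (lerP r r') => hr.
  - exists c, r; split => // V; rewrite in_cons => /orP[/eqP->|/hw//].
    move=> w cw nw; apply: nw; apply: (sub c' r' c r) => //.
    by have := QQ _ _ _ _ q q'; rewrite (max_r hr).
  - exists c', r'; split => //.
    + apply: subset_trans sb; apply: sub; last exact: ltW.
      by have := QQ _ _ _ _ q' q; rewrite (max_r (ltW hr)).
    + move=> V; rewrite in_cons => /orP[/eqP->|Vs]; first by move=> w cw; apply.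
      move=> w cw; apply: (hw V Vs w); apply: (sub c r c' r') => //; last exact: ltW.
      by have := QQ _ _ _ _ q' q; rewrite (max_r (ltW hr)).
have [c [r [q sb hw]]] := key s hs.
have cc : cball c r c by rewrite /cball /= subrr (a0 ha); exact: Q0 q.
have [U Us Uc] := Cs c (sb c cc).
exact: hw U Us c cc Uc.
Qed.
End FieldK.

Section HBsec.
Variables (R : realType) (K : fieldType) (a : K -> R) (hK : local_field a).
Let ha : nonarch_abs a. Proof. by case: hK. Qed.
Variables (E : lmodType K) (V : set E).
Hypothesis Vadd : forall u v, V u -> V v -> V (u + v).
Hypothesis Vscale : forall k u, a k <= 1 -> V u -> V (k *: u).
Variables (x : E) (c0 : K).
Hypothesis x0 : x != 0.
Hypothesis hx : forall l, V (l *: x) -> a (l * c0) <= 1.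

Lemma HB : exists F : E -> K, [/\ (forall k u v, F (k *: u + v) = k * F u + F v),
  F x = c0 & forall u, V u -> a (F u) <= 1].
Proof.
pose good (A : set (E * K)) :=
  [/\ (forall u s v t k, A (u,s) -> A (v,t) -> A (k *: u + v, k * s + t)),
      (forall u s t, A (u,s) -> A (u,t) -> s = t),
      (forall u s, A (u,s) -> V u -> a s <= 1) &
      ((exists p, A p) -> A (x, c0))].
pose G0 := [set p | exists l, p = (l *: x, l * c0)].
have gG0 : good G0.
  split.
  - move=> u s v t k [l [-> ->]] [l' [-> ->]]; exists (k * l + l').
    by rewrite scalerA scalerDl mulrDl mulrA.
  - move=> u s t [l [eu es]] [l' [eu' et]].
    have ll : l = l'.
      have : (l - l') *: x = 0 by rewrite scalerBl -eu -eu' subrr.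
      by move/eqP; rewrite scaler_eq0 (negbTE x0) orbF subr_eq0 => /eqP.
    by rewrite es et ll.
  - by move=> u s [l [-> ->]] Vu; exact: hx.
  - by move=> _; exists 1; rewrite scale1r mul1r.
have chain : forall Fm : set (set (E * K)), Fm `<=` good ->
    total_on Fm subset -> good (\bigcup_(X in Fm) X).
  move=> Fm Fg tot; split.
  - move=> u s v t k [A1 FA1 A1us] [A2 FA2 A2vt].
    have [A12|A21] := tot _ _ FA1 FA2.
      exists A2 => //; case: (Fg _ FA2) => hc _ _ _; apply: hc => //; exact: A12.
    exists A1 => //; case: (Fg _ FA1) => hc _ _ _; apply: hc => //; exact: A21.
  - move=> u s t [A1 FA1 A1us] [A2 FA2 A2vt].
    have [A12|A21] := tot _ _ FA1 FA2.
      case: (Fg _ FA2) => _ hf _ _; apply: hf A2vt; exact: A12.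
    case: (Fg _ FA1) => _ hf _ _; apply: hf A1us _; exact: A21.
  - by move=> u s [A1 FA1 h] Vu; case: (Fg _ FA1) => _ _ hb _; exact: hb h Vu.
  - move=> [p [A1 FA1 h]]; exists A1 => //; case: (Fg _ FA1) => _ _ _ hn.
    by apply: hn; exists p.
have [A [gA maxA]] := Zorn_bigcup chain.
have Ax : A (x, c0).
  case: gA => _ _ _ hn; apply: hn; apply: contrapT => ne.
  apply: (maxA G0) gG0; split.
    by move=> p Ap; exfalso; apply ne; exists p.
  by move=> h; apply ne; exists (x, c0); apply h; exists 1; rewrite scale1r mul1r.
case: gA => Acl Afun Abd _.
have A0 : A (0, 0).
  by have := Acl _ _ _ _ (-1) Ax Ax; rewrite scaleN1r mulN1r !addNr.
have Ascale : forall u s k, A (u,s) -> A (k *: u, k * s).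
  by move=> u s k h; have := Acl _ _ _ _ k h A0; rewrite !addr0.
have Asub : forall u s v t, A (u,s) -> A (v,t) -> A (v - u, t - s).
  by move=> u s v t h1 h2; have := Acl _ _ _ _ (-1) h1 h2;
    rewrite scaleN1r mulN1r ![- _ + _]addrC.
have tot : forall y, exists s, A (y, s).
  move=> y; apply: contrapT => ny.
  pose Q c r := exists z s mu v, [/\ A (z, s), mu != 0, V v, y - z = mu *: v &
    (c = s /\ r = a mu)].
  have Q0 : forall c r, Q c r -> 0 <= r.
    by move=> c r [z [s [mu [v [_ _ _ _ [_ ->]]]]]]; exact: a_ge0.
  have QQ1 : forall z1 s1 mu1 v1 z2 s2 mu2 v2, A (z1,s1) -> A (z2,s2) ->
      mu1 != 0 -> mu2 != 0 -> V v1 -> V v2 -> y - z1 = mu1 *: v1 ->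
      y - z2 = mu2 *: v2 -> a mu1 <= a mu2 -> a (s1 - s2) <= a mu2.
    move=> z1 s1 mu1 v1 z2 s2 mu2 v2 h1 h2 m1 m2 V1 V2 e1 e2 hm.
    pose w := (mu1 / mu2) *: v1 + (-1) *: v2.
    have Vw : V w.
      apply: Vadd; apply: Vscale => //; last by rewrite (aN1 ha).
      rewrite (aM ha) (aV ha m2) ler_pdivrMr ?(a_gt0 ha m2) // mul1r //.
    have ew : mu2^-1 *: (z2 - z1) = w.
      have -> : z2 - z1 = (y - z1) - (y - z2) by symmetry; rewrite opprB addrC addrA subrK.
      rewrite e1 e2 scalerBr !scalerA mulVf // /w scaleN1r scale1r.
      by rewrite mulrC.
    have Aw := Ascale _ _ (mu2^-1) (Asub _ _ _ _ h1 h2).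
    rewrite ew in Aw; have := Abd _ _ Aw Vw.
    rewrite (aM ha) (aV ha m2) (aB ha s1 s2) => h.
    have h3 : a mu2 * (a mu2)^-1 = 1 by rewrite mulfV // (a_neq0 ha m2).
    have := a_gt0 ha m2; have := a_ge0 ha (s2 - s1); nra.
  have QQ : forall c1 r1 c2 r2, Q c1 r1 -> Q c2 r2 -> a (c1 - c2) <= Num.max r1 r2.
    move=> c1 r1 c2 r2 [z1 [s1 [mu1 [v1 [A1 m1 V1 e1 [-> ->]]]]]]
      [z2 [s2 [mu2 [v2 [A2 m2 V2 e2 [-> ->]]]]]].
    case: (lerP (a mu1) (a mu2)) => h.
      exact: (QQ1 z1 s1 mu1 v1 z2 s2 mu2 v2).
    rewrite (aB ha); exact: (QQ1 z2 s2 mu2 v2 z1 s1 mu1 v1) (ltW h).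
  have [t ht] := sph hK Q0 QQ.
  pose A' := [set p | exists u s l, A (u, s) /\ p = (u + l *: y, s + l * t)].
  have gA' : good A'.
    split.
    - move=> u s v t' k [u1 [s1 [l1 [h1 [-> ->]]]]] [u2 [s2 [l2 [h2 [-> ->]]]]].
      exists (k *: u1 + u2), (k * s1 + s2), (k * l1 + l2); split; first exact: Acl.
      congr (_, _); last by ring.
      by rewrite scalerDr scalerA scalerDl addrACA.
    - move=> w s s' [u1 [s1 [l1 [h1 e1]]]] [u2 [s2 [l2 [h2 e2]]]].
      case: e1 => ew es; case: e2 => ew' es'.
      have E1 : u1 + l1 *: y = u2 + l2 *: y by rewrite -ew -ew'.
      case: (eqVneq l1 l2) => [el|nl].
        subst l2; have eu : u1 = u2 by apply: (addIr (l1 *: y)).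
        by subst u2; rewrite es es' (Afun _ _ _ h1 h2).
      exfalso; apply: ny; exists ((l1 - l2)^-1 * (s2 - s1)).
      have := Ascale _ _ ((l1 - l2)^-1) (Asub _ _ _ _ h1 h2).
      suff -> : (l1 - l2)^-1 *: (u2 - u1) = y by [].
      have e : u2 - u1 = (l1 - l2) *: y.
        have -> : u2 - u1 = (u2 + l2 *: y) - (u1 + l2 *: y).
          by rewrite opprD addrACA subrr addr0.
        by rewrite -E1 opprD addrACA subrr add0r scalerBl.
      by rewrite e scalerA mulVf ?scale1r // subr_eq0.
    - move=> w s [u [s1 [l [h [ew es]]]]] Vw; subst w s.
      case: (eqVneq l 0) Vw => [->|l0] Vw.
        by rewrite scale0r mul0r !addr0 in Vw *; exact: Abd h Vw.
      have Az := Ascale _ _ (- l^-1) h.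
      have q : Q (- l^-1 * s1) (a (l^-1)).
        exists (- l^-1 *: u), (- l^-1 * s1), l^-1, (u + l *: y); split => //.
        - by rewrite invr_neq0.
        - by rewrite scaleNr opprK scalerDr scalerA mulVf // scale1r addrC.
      have := ht _ _ q.
      have -> : s1 + l * t = l * (t - - l^-1 * s1).
        by rewrite mulNr opprK mulrDr mulrA mulfV // mul1r addrC.
      rewrite (aM ha) (aV ha l0) => h'.
      have h3 : a l * (a l)^-1 = 1 by rewrite mulfV // (a_neq0 ha l0).
      have := a_gt0 ha l0; nra.
    - by move=> _; exists x, c0, 0; split => //; rewrite scale0r mul0r !addr0.
  apply: (maxA A') gA'; split.
    by move=> [u s] h; exists u, s, 0; split => //; rewrite scale0r mul0r !addr0.
  move=> h; apply: ny; exists t; apply: h; exists 0, 0, 1; split => //.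
  by rewrite scale1r mul1r !add0r.
pose F y := projT1 (cid (tot y)).
have FP y : A (y, F y) by rewrite /F; case: (cid (tot y)).
exists F; split.
- move=> k u v; apply: (Afun (k *: u + v)); [exact: FP | exact: Acl (FP u) (FP v)].
- exact: Afun (FP x) Ax.
- by move=> u Vu; exact: Abd (FP u) Vu.
Qed.
End HBsec.

Section Borel.
Variables (R : realType) (T : Type) (d : T -> T -> R).
Lemma borel_open U : mopen d U -> mborel d U.
Proof. by move=> h; exact: sub_sigma_algebra. Qed.
Lemma borelC A : mborel d A -> mborel d (~` A).
Proof. by move=> h; case: (smallest_sigma_algebra setT (mopen d)) => _ hc _; rewrite -setTD; exact: hc. Qed.
Lemma borel0 : mborel d set0.
Proof. by case: (smallest_sigma_algebra setT (mopen d)). Qed.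
Lemma open_useq (s : seq (set T)) : (forall U, U \in s -> mopen d U) ->
  mopen d [set z | exists2 U, U \in s & U z].
Proof.
move=> hs z [U Us Uz]; have [r [r0 hr]] := hs U Us z Uz.
by exists r; split => // y hy; exists U => //; exact: hr.
Qed.
End Borel.

Section NormE.
Variables (R : realType) (K : fieldType) (a : K -> R) (ha : nonarch_abs a).
Variables (E : lmodType K) (n : E -> R) (hn : ultranorm a n).
Lemma n_ge0 x : 0 <= n x. Proof. by case: hn. Qed.
Lemma n_eq0 x : n x = 0 <-> x = 0. Proof. by case: hn. Qed.
Lemma nZ c x : n (c *: x) = a c * n x. Proof. by case: hn. Qed.
Lemma nD x y : n (x + y) <= Num.max (n x) (n y). Proof. by case: hn. Qed.
Lemma n0 : n 0 = 0. Proof. exact/n_eq0. Qed.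
Lemma nN x : n (- x) = n x. Proof. by rewrite -scaleN1r nZ (aN1 ha) mul1r. Qed.
Lemma nB x y : n (x - y) = n (y - x). Proof. by rewrite -opprB nN. Qed.
Lemma nD' x y : n (x + y) <= n x \/ n (x + y) <= n y.
Proof. by have := nD x y; rewrite le_max => /orP. Qed.
Lemma n_tri' x y z : n (x - z) <= n (x - y) \/ n (x - z) <= n (y - z).
Proof. by have := nD' (x - y) (y - z); rewrite addrA subrK. Qed.

Lemma ball_open c r : mopen (distE n) [set z | n (z - c) < r].
Proof.
move=> z /= hz; exists r; split; first by have := n_ge0 (z - c); lra.
move=> y hy /=; rewrite /distE in hy; rewrite nB in hy.
by case: (n_tri' y z c) => h; lra.
Qed.

Lemma compact_closed G x : mcompact (distE n) G -> ~ G x ->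
  exists r, 0 < r /\ forall y, n (x - y) < r -> ~ G y.
Proof.
move=> cG nGx.
pose F := [set U | exists2 r, 0 < r & U = [set y | r < n (y - x)]].
have h1 : F `<=` mopen (distE n).
  move=> _ [r r0 ->] y /= hy; exists (n (y - x) - r); split; first lra.
  move=> y' hy' /=; rewrite /distE in hy'.
  have := n_ge0 (y' - x); case: (n_tri' y y' x) => h; lra.
have h2 : G `<=` \bigcup_(U in F) U.
  move=> g Gg; have gx : g - x != 0 by rewrite subr_eq0; apply/eqP => e; apply: nGx; rewrite -e.
  have ngx : 0 < n (g - x) by rewrite lt_def n_ge0 andbT; apply/eqP => /n_eq0 /eqP; apply/negP.
  exists [set y | n (g - x) / 2 < n (y - x)]; last by rewrite /=; lra.
  by exists (n (g - x) / 2) => //; lra.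
have [s [hs Cs]] := cG F h1 h2.
have key : forall s : seq (set E), (forall U, U \in s -> F U) ->
    exists r, 0 < r /\ forall U, U \in s -> forall y, U y -> r < n (y - x).
  elim => [|U s' IH] hs'; first by exists 1; split.
  have [r [r0 hr]] := IH (fun V Vs => hs' V (inS _ Vs)).
  have [r' r'0 eU] := hs' U (mem_head _ _).
  exists (Num.min r r'); split; first by rewrite lt_min r0 r'0.
  move=> V; rewrite in_cons => /orP[/eqP->|Vs] y; rewrite ?eU /= => hy.
    by case: (lerP r r') => hrr; lra.
  by have := hr V Vs y hy; case: (lerP r r') => hrr; lra.
have [r [r0 hr]] := key s hs.
exists r; split => // y hy Gy; have [U Us Uy] := Cs y Gy.
by have := hr U Us y Uy; rewrite nB; lra.
Qed.

Lemma compact_borel G : mcompact (distE n) G -> mborel (distE n) G.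
Proof.
move=> cG; rewrite -(setCK G); apply: borelC; apply: borel_open.
move=> x /= nGx; have [r [r0 hr]] := compact_closed cG nGx.
by exists r; split => // y hy; exact: hr.
Qed.
End NormE.

Section Ess.
Variables (R : realType) (K : fieldType) (a : K -> R) (hK : local_field a).
Let ha : nonarch_abs a. Proof. by case: hK. Qed.
Variables (E : lmodType K) (n : E -> R) (hn : ultranorm a n) (G : set E).
Hypotheses (hG : D_submodule a G) (cG : mcompact (distE n) G).
Variables (d : measure_display) (O : measurableType d) (P : probability O R) (X : O -> E).
Hypotheses (hX : rvE n X) (hH : law_is_haar n P X G).

Let GB : mborel (distE n) G := compact_borel ha hn cG.

Lemma ess_le1 (T : E -> K) : (forall g, G g -> a (T g) <= 1) ->
  (ess_sup P (fun w => (a (T (X w)))%:E) <= 1%:E)%E.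
Proof.
move=> hT; apply: ereal_inf_lbound => /=.
exists (X @^-1` (~` G)); split.
- exact: hX (borelC GB).
- rewrite preimage_setC probability_setC; last exact: hX.
  by case: hH => -> _; rewrite subee.
- move=> w /= hw GX; apply: hw; rewrite lee_fin; exact: hT.
Qed.

Lemma ess_ge (T : E -> K) x : G x -> dual_elt a n T ->
  ((a (T x))%:E <= ess_sup P (fun w => (a (T (X w)))%:E))%E.
Proof.
move=> Gx [Tlin Tc]; apply/ereal_infP => y [N [mN PN sub]].
rewrite leNgt; apply/negP => hy.
have [del del0 hdel] : exists2 del : R, 0 < del &
    forall g, n (g - x) < del -> (y < (a (T g))%:E)%E.
  case: (eqVneq (T x) 0) => Tx0.
    exists 1 => // g _; rewrite Tx0 (a0 ha) in hy; apply: (lt_le_trans hy).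
    rewrite lee_fin; exact: a_ge0.
  have [del del0 hd] := Tc x (a (T x)) (a_gt0 ha Tx0).
  exists del => // g hg; rewrite (nB ha hn) in hg.
  have h1 := hd g hg.
  have : a (- (T x - T g)) < a (T x) by rewrite (aN ha).
  by move/(a_iso ha); rewrite opprB subrK => ->.
pose B := [set z : E | n z < del].
have Bx : forall g, [set z | B (z - g)] = [set z | n (z - g) < del] by [].
have BB : mborel (distE n) B.
  have -> : B = [set z | n (z - 0) < del].
    by rewrite /B; apply/seteqP; split => z /=; rewrite subr0.
  exact: borel_open (ball_open ha hn (c:=0) (r:=del)).
have mball : forall g, measurable (X @^-1` [set z | B (z - g)]).
  by move=> g; rewrite Bx; exact: hX (borel_open (ball_open ha hn (c:=g) (r:=del))).
have Pt : forall g, G g -> P (X @^-1` [set z | B (z - g)]) = 0%E.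
  move=> g Gg; case: hH => _ inv; rewrite (inv g Gg B BB) -(inv x Gx B BB).
  apply/eqP; rewrite eq_le measure_ge0 andbT -PN.
  apply: le_measure; rewrite ?inE //.
  move=> w /= hw; apply: sub => /= hw'; have := hdel _ hw; by rewrite ltNge hw'.
pose F := [set U | exists2 g, G g & U = [set z | B (z - g)]].
have Fo : F `<=` mopen (distE n).
  by move=> U [g0 _ ->]; rewrite Bx; exact: (ball_open ha hn (c:=g0) (r:=del)).
have h2 : G `<=` \bigcup_(U in F) U.
  move=> z Gz; exists [set z' | B (z' - z)]; first by exists z.
  by rewrite /B /= subrr (n0 hn).
have [s [hs Cs]] := cG Fo h2.
have key : forall s : seq (set E), (forall U, U \in s -> F U) ->
    P (X @^-1` [set z | exists2 U, U \in s & U z]) = 0%E.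
  elim => [|U s' IH] hs'.
    have -> : X @^-1` [set z | exists2 U, U \in [::] & U z] = set0.
      by apply/seteqP; split => // w [].
    exact: measure0.
  have -> : X @^-1` [set z | exists2 V, V \in U :: s' & V z] =
      X @^-1` U `|` X @^-1` [set z | exists2 V, V \in s' & V z].
    apply/seteqP; split => w /=.
      move=> [V]; rewrite in_cons => /orP[/eqP->|Vs] Vw; [by left | by right; exists V].
    move=> [Uw|[V Vs Vw]]; [exists U => //; exact: mem_head | exists V => //; exact: inS].
  have [g Gg eU] := hs' U (mem_head _ _).
  have hs'' : forall V, V \in s' -> F V by move=> V Vs; exact: hs' V (inS _ Vs).
  apply/eqP; rewrite eq_le measure_ge0 andbT.
  apply: le_trans (measureU2 P _ _) _.
  - by rewrite eU; exact: mball.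
  - exact: hX (borel_open (open_useq (fun V Vs => Fo V (hs'' V Vs)))).
  - rewrite eU; change (P (X @^-1` [set z | B (z - g)%R]) +
      P (X @^-1` [set z | exists2 V, V \in s' & V z]) <= 0)%E.
    by rewrite (Pt g Gg) IH // adde0.
have := key s hs.
have : (1 <= P (X @^-1` [set z | exists2 U, U \in s & U z]))%E.
  case: hH => <- _; apply: le_measure; rewrite ?inE.
  - exact: hX GB.
  - exact: hX (borel_open (open_useq (fun V Vs => Fo V (hs V Vs)))).
  - by move=> w /= Gw; exact: Cs.
move=> h e.
have h' : (1 <= P (X @^-1` [set z | exists2 U, U \in s & U z]))%E := h.
by move: h'; rewrite e lee_fin ler10.
Qed.

Lemma sep x : ~ G x -> exists T : E -> K, dual_elt a n T /\ ~ ((a (T x))%:E <= ess_sup P (fun w => (a (T (X w)))%:E))%E.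
Proof.
move=> nGx.
have [r [r0 hr]] := compact_closed ha hn cG nGx.
pose rho := r / 2.
pose V := [set v | exists2 g, G g & n (v - g) <= rho].
case: hG => G0 Gadd Gsc.
have Vadd : forall u v, V u -> V v -> V (u + v).
  move=> u v [g1 G1 h1] [g2 G2 h2]; exists (g1 + g2); first exact: Gadd.
  by rewrite opprD addrACA; case: (nD' hn (u - g1) (v - g2)) => h; lra.
have Vscale : forall k u, a k <= 1 -> V u -> V (k *: u).
  move=> k u hk [g Gg hg]; exists (k *: g); first exact: Gsc.
  rewrite -scalerBr (nZ hn); have := a_ge0 ha k; have := n_ge0 hn (u - g); nra.
have x0 : x != 0 by apply/eqP => e; apply: nGx; rewrite e.
have [p [/andP [p0 p1] hp]] := discrete hK.
have pn0 : p != 0 by apply/eqP => e; move: p0; rewrite e (a0 ha) ltxx.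
have hpi : a p * (a p)^-1 = 1 by rewrite mulfV // (a_neq0 ha pn0).
have hx : forall l, V (l *: x) -> a (l * p^-1) <= 1.
  move=> l hl; rewrite (aM ha) (aV ha pn0).
  case: (ltrP (a l) 1) => hl1.
    have := hp l hl1; have := a_ge0 ha l; nra.
  exfalso.
  have l0 : l != 0 by apply/eqP => e; move: hl1; rewrite e (a0 ha); lra.
  have hli : a l * (a l)^-1 = 1 by rewrite mulfV // (a_neq0 ha l0).
  have [g Gg hg] : V x.
    have := Vscale (l^-1) _ _ hl; rewrite scalerA mulVf // scale1r; apply.
    rewrite (aV ha l0); have := a_gt0 ha l0; nra.
  by apply: (hr g) Gg; rewrite /rho in hg; lra.
have [F [Flin Fx Fb]] := HB hK Vadd Vscale x0 hx.
have F0 : F 0 = 0.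
  have := Flin 1 0 0; rewrite scale1r addr0 mul1r => h.
  by apply: (addrI (F 0)); rewrite addr0 -h.
have FZ : forall k u, F (k *: u) = k * F u.
  by move=> k u; have := Flin k u 0; rewrite addr0 F0 addr0.
have FB : forall u v, F (u - v) = F u - F v.
  by move=> u v; have := Flin (-1) v u; rewrite scaleN1r mulN1r addrC [- F v + _]addrC.
have rho0 : 0 < rho by rewrite /rho; lra.
have dF : dual_elt a n F.
  split; first exact: Flin.
  move=> x' e e0; have [z [z0 hz]] := small hK e0.
  have hzi : a z * (a z)^-1 = 1 by rewrite mulfV // (a_neq0 ha z0).
  exists (rho * a z); first by rewrite mulr_gt0 // (a_gt0 ha z0).
  move=> y hy; rewrite -FB.
  have Vw : V (z^-1 *: (x' - y)).
    exists 0 => //; rewrite subr0 (nZ hn) (aV ha z0).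
    have := a_gt0 ha z0; have := n_ge0 hn (x' - y); nra.
  have := Fb _ Vw; rewrite FZ (aM ha) (aV ha z0) => h.
  have := a_gt0 ha z0; have := a_ge0 ha (F (x' - y)); nra.
exists F; split => //.
have := ess_le1 (T := F) _.
move=> /(_ _) h1 h2.
have h1' : (ess_sup P (fun w => (a (F (X w)))%:E) <= 1%:E)%E.
  apply: h1 => g Gg; apply: Fb; exists g => //; rewrite subrr (n0 hn); lra.
have := le_trans h2 h1'; rewrite Fx lee_fin (aV ha pn0); nra.
Qed.
End Ess.

Lemma borel_pre (R : realType) (T1 T2 : Type) (d1 : T1 -> T1 -> R) (d2 : T2 -> T2 -> R)
  (f : T1 -> T2) : (forall U, mopen d2 U -> mopen d1 (f @^-1` U)) ->
  forall C, mborel d2 C -> mborel d1 (f @^-1` C).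
Proof.
move=> fo C BC.
have h : mborel d2 `<=` [set C | mborel d1 (f @^-1` C)].
  apply: smallest_sub; last by move=> U oU; apply: borel_open; exact: fo.
  have [h0 hC hU] := smallest_sigma_algebra setT (mopen d1).
  by split => //= [A hA | F hF]; [exact: hC | exact: hU].
exact: h BC.
Qed.

Lemma lam (R : realType) (d' : measure_display) (O' : measurableType d')
  (P' : probability O' R) (T : Type) (f g : O' -> T) :
  lambda_system setT [set C | [/\ measurable (f @^-1` C), measurable (g @^-1` C) &
     P' (f @^-1` C) = P' (g @^-1` C)]].
Proof.
have fin : forall S, measurable S -> (P' S < +oo)%E.
  by move=> S mS; apply: (le_lt_trans (probability_le1 _ mS)); exact: ltry.
split.
- by [].
- by split; [exact: measurableT|exact: measurableT|].
- move=> A B BA [fA gA eA] [fB gB eB]; split.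
  + exact: measurableD.
  + exact: measurableD.
  + change (P' (f @^-1` A `\` f @^-1` B) = P' (g @^-1` A `\` g @^-1` B)).
    rewrite measureD ?fin // measureD ?fin //.
    have -> : f @^-1` A `&` f @^-1` B = f @^-1` B by apply/setIidr => x /BA.
    have -> : g @^-1` A `&` g @^-1` B = g @^-1` B by apply/setIidr => x /BA.
    change ((P' (f @^-1` A) - P' (f @^-1` B))%E = (P' (g @^-1` A) - P' (g @^-1` B))%E).
    by rewrite eA eB.
- move=> F ndF hF.
  have mf : forall i, measurable (f @^-1` F i) by move=> i; case: (hF i).
  have mg : forall i, measurable (g @^-1` F i) by move=> i; case: (hF i).
  split.
  + exact: bigcupT_measurable _ mf.
  + exact: bigcupT_measurable _ mg.
  + have ndf : {homo (fun i => f @^-1` F i) : i j / (i <= j)%N >-> (i <= j)%O}.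
      move=> i j ij; apply/subsetPset => x; have /subsetPset := ndF _ _ ij; apply.
    have ndg : {homo (fun i => g @^-1` F i) : i j / (i <= j)%N >-> (i <= j)%O}.
      move=> i j ij; apply/subsetPset => x; have /subsetPset := ndF _ _ ij; apply.
    have c1 := @nondecreasing_cvg_mu _ _ _ P' (fun i => f @^-1` F i) mf (bigcupT_measurable _ mf) ndf.
    have c2 := @nondecreasing_cvg_mu _ _ _ P' (fun i => g @^-1` F i) mg (bigcupT_measurable _ mg) ndg.
    have e : (P' \o (fun i => f @^-1` F i)) = (P' \o (fun i => g @^-1` F i)).
      by apply/funext => i /=; case: (hF i).
    rewrite e in c1; exact: (cvg_unique _ c1 c2).
Qed.

Lemma max_lt (R : realType) (x y r : R) : (Num.max x y < r) <-> (x < r /\ y < r).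
Proof. by rewrite gt_max; split => [/andP//|[-> ->]]. Qed.


Section Mat.
Variables (R : realType) (K : fieldType) (a : K -> R) (ha : nonarch_abs a).
Variables (E : lmodType K) (n : E -> R) (hn : ultranorm a n).

Definition Mf (b11 b12 b21 b22 : K) (p : E * E) : E * E :=
  (b11 *: p.1 + b12 *: p.2, b21 *: p.1 + b22 *: p.2).
Definition N2 (p : E * E) := Num.max (n p.1) (n p.2).

Lemma lin2 (al be g1 g2 h1 h2 : K) (u v : E) :
  al *: (g1 *: u + g2 *: v) + be *: (h1 *: u + h2 *: v) =
  (al * g1 + be * h1) *: u + (al * g2 + be * h2) *: v.
Proof. by rewrite !scalerDr !scalerA addrACA -!scalerDl. Qed.

Lemma Mf_comp c11 c12 c21 c22 b11 b12 b21 b22 p :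
  Mf c11 c12 c21 c22 (Mf b11 b12 b21 b22 p) =
  Mf (c11*b11 + c12*b21) (c11*b12 + c12*b22) (c21*b11 + c22*b21) (c21*b12 + c22*b22) p.
Proof. by rewrite /Mf /= !lin2. Qed.

Lemma Mf_id p : Mf 1 0 0 1 p = p.
Proof. by case: p => u v; rewrite /Mf /= !scale1r !scale0r addr0 add0r. Qed.

Lemma nsc b u : a b <= 1 -> n (b *: u) <= n u.
Proof. by move=> h; rewrite (nZ hn) -[leRHS]mul1r; apply: ler_wpM2r => //; exact: (n_ge0 hn). Qed.

Lemma Mf_le b11 b12 b21 b22 p : a b11 <= 1 -> a b12 <= 1 -> a b21 <= 1 -> a b22 <= 1 ->
  N2 (Mf b11 b12 b21 b22 p) <= N2 p.
Proof.
move=> h11 h12 h21 h22; rewrite /N2 /Mf /=.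
have m1 : n p.1 <= Num.max (n p.1) (n p.2) by rewrite le_max lexx.
have m2 : n p.2 <= Num.max (n p.1) (n p.2) by rewrite le_max lexx orbT.
have k1 := nsc p.1 h11; have k2 := nsc p.2 h12.
have k3 := nsc p.1 h21; have k4 := nsc p.2 h22.
rewrite ge_max; apply/andP; split.
  case: (nD' hn (b11 *: p.1) (b12 *: p.2)) => h; apply: (le_trans h).
    exact: (le_trans k1 m1).
  exact: (le_trans k2 m2).
case: (nD' hn (b21 *: p.1) (b22 *: p.2)) => h; apply: (le_trans h).
  exact: (le_trans k3 m1).
exact: (le_trans k4 m2).
Qed.

Lemma Mf_dist b11 b12 b21 b22 p q :
  distE2 n (Mf b11 b12 b21 b22 p) (Mf b11 b12 b21 b22 q) =
  N2 (Mf b11 b12 b21 b22 (p.1 - q.1, p.2 - q.2)).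
Proof.
have ls : forall (x y : K) (u v u' v' : E),
    (x *: u + y *: v) - (x *: u' + y *: v') = x *: (u - u') + y *: (v - v').
  by move=> x y u v u' v'; rewrite !scalerBr opprD addrACA.
by rewrite /distE2 /N2 /Mf /= !ls.
Qed.

Lemma orth_facts (a11 a12 a21 a22 : K) : Pilot.Defs.orthonormal a (a11, a12) (a21, a22) ->
  exists c11 c12 c21 c22,
  [/\ [/\ a a11 <= 1, a a12 <= 1, a a21 <= 1 & a a22 <= 1],
      [/\ a c11 <= 1, a c12 <= 1, a c21 <= 1 & a c22 <= 1],
      (forall p, Mf c11 c12 c21 c22 (Mf a11 a12 a21 a22 p) = p) &
      (forall p, Mf a11 a12 a21 a22 (Mf c11 c12 c21 c22 p) = p)].
Proof.
move=> [/= r1 [r2 H]].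
have le1 : forall x y : R, Num.max x y = 1 -> x <= 1 /\ y <= 1.
  by move=> x y <-; rewrite !le_max !lexx ?orbT.
have [h11 h12] := le1 _ _ r1; have [h21 h22] := le1 _ _ r2.
pose D := a11 * a22 - a12 * a21.
have D0 : D != 0.
  apply/eqP => hD.
  have e1 := H a21 (- a11).
  have z1 : a21 * a11 + - a11 * a21 = 0 by ring.
  have z2 : a21 * a12 + - a11 * a22 = 0 by rewrite -oppr0 -hD /D; ring.
  rewrite z1 z2 (a0 ha) (aN ha) maxxx in e1.
  have e2 := H a22 (- a12).
  have z3 : a22 * a11 + - a12 * a21 = 0 by rewrite -hD /D; ring.
  have z4 : a22 * a12 + - a12 * a22 = 0 by ring.
  rewrite z3 z4 (a0 ha) (aN ha) maxxx in e2.
  have f1 : a a11 <= 0 by rewrite e1 le_max lexx orbT.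
  have f2 : a a12 <= 0 by rewrite e2 le_max lexx orbT.
  move: r1; rewrite (max_r (le_trans f1 (a_ge0 ha a12))) => e.
  by move: f2; rewrite e ler10.
pose c11 := a22 / D; pose c12 := - (a12 / D).
pose c21 := - (a21 / D); pose c22 := a11 / D.
have i1 : c11 * a11 + c12 * a21 = 1 by rewrite /c11 /c12 /D; field.
have i2 : c11 * a12 + c12 * a22 = 0 by rewrite /c11 /c12 /D; field.
have i3 : c21 * a11 + c22 * a21 = 0 by rewrite /c21 /c22 /D; field.
have i4 : c21 * a12 + c22 * a22 = 1 by rewrite /c21 /c22 /D; field.
have j1 : a11 * c11 + a12 * c21 = 1 by rewrite /c11 /c21 /D; field.
have j2 : a11 * c12 + a12 * c22 = 0 by rewrite /c12 /c22 /D; field.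
have j3 : a21 * c11 + a22 * c21 = 0 by rewrite /c11 /c21 /D; field.
have j4 : a21 * c12 + a22 * c22 = 1 by rewrite /c12 /c22 /D; field.
have e3 := H c11 c12; rewrite i1 i2 (a1 ha) (a0 ha) in e3.
have e4 := H c21 c22; rewrite i3 i4 (a1 ha) (a0 ha) in e4.
rewrite (max_l ler01) in e3; rewrite (max_r ler01) in e4.
have [k11 k12] := le1 _ _ (esym e3).
have [k21 k22] := le1 _ _ (esym e4).
exists c11, c12, c21, c22; split => //.
- by move=> p; rewrite Mf_comp i1 i2 i3 i4 Mf_id.
- by move=> p; rewrite Mf_comp j1 j2 j3 j4 Mf_id.
Qed.
End Mat.


Section Gauss.
Variables (R : realType) (K : fieldType) (a : K -> R) (hK : local_field a).
Let ha : nonarch_abs a. Proof. by case: hK. Qed.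
Variables (E : lmodType K) (n : E -> R) (hn : ultranorm a n).
Variables (u : nat -> E).
Hypothesis hu : forall x (e : R), 0 < e -> exists k, distE n x (u k) < e.
Variables (G : set E).
Hypotheses (hG : D_submodule a G) (cG : mcompact (distE n) G).
Variables (d : measure_display) (O : measurableType d) (P : probability O R) (X : O -> E).
Hypotheses (hX : rvE n X) (hH : law_is_haar n P X G).

Let ball2 (y : E * E) (r : R) := [set q : E * E | distE2 n y q < r].
Let ball1 (c : E) (r : R) := [set z : E | n (c - z) < r].

Lemma ball1_open c r : mopen (distE n) (ball1 c r).
Proof.
have -> : ball1 c r = [set z | n (z - c) < r].
  by apply/seteqP; split => z /=; rewrite (nB ha hn).
exact: (ball_open ha hn (c:=c) (r:=r)).
Qed.
Lemma ball1_borel c r : mborel (distE n) (ball1 c r).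
Proof. exact: borel_open (ball1_open (c:=c) (r:=r)). Qed.

Lemma ball2_open y r : mopen (distE2 n) (ball2 y r).
Proof.
move=> q /max_lt [h1 h2]; exists r; split; first by have := n_ge0 hn (y.1 - q.1); lra.
move=> q' /max_lt [h1' h2']; apply/max_lt; split.
  by case: (n_tri' hn y.1 q.1 q'.1) => h; lra.
by case: (n_tri' hn y.2 q.2 q'.2) => h; lra.
Qed.

Let Pi := [set C : set (E * E) | C = set0 \/ exists y r, 0 < r /\ C = ball2 y r].

Lemma ball_nest c c' q z r r' : n (c - q) < r -> n (c' - q) < r' -> r <= r' ->
  n (c - z) < r -> n (c' - z) < r'.
Proof.
move=> h1 h2 hr h3; case: (n_tri' hn c' q z) => h; first lra.
have t := n_tri' hn q c z; rewrite (nB ha hn q c) in t.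
by case: t => h'; lra.
Qed.

Lemma Pi_setI : setI_closed Pi.
Proof.
move=> A B [->|[y [r [r0 ->]]]]; first by left; rewrite set0I.
move=> [->|[y' [r' [r0' ->]]]]; first by left; rewrite setI0.
have [[q [q1 q2]]|nq] := pselect (exists q, ball2 y r q /\ ball2 y' r' q); last first.
  by left; apply/seteqP; split => // z [z1 z2]; apply: nq; exists z.
right; move: q1 q2 => /max_lt [q11 q12] /max_lt [q21 q22].
case: (lerP r r') => hr.
  exists y, r; split => //; apply/seteqP; split => z; first by case.
  move=> hz; split => //; move: hz => /max_lt [z1 z2]; apply/max_lt; split.
    exact: (ball_nest q11 q21 hr z1).
  exact: (ball_nest q12 q22 hr z2).
exists y', r'; split => //; apply/seteqP; split => z; first by case.
move=> hz; split => //; move: hz => /max_lt [z1 z2]; apply/max_lt; split.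
  exact: (ball_nest q21 q11 (ltW hr) z1).
exact: (ball_nest q22 q12 (ltW hr) z2).
Qed.

Lemma open_Pi U : mopen (distE2 n) U -> <<s Pi>> U.
Proof.
move=> oU.
have [_ _ sU] := smallest_sigma_algebra setT Pi.
pose rk (k : nat) : R := (k.+1%:R)^-1.
have rk0 : forall k, 0 < rk k by move=> k; rewrite /rk invr_gt0 ltr0Sn.
pose A (i j k : nat) : set (E * E) :=
  if pselect (ball2 (u i, u j) (rk k) `<=` U) then ball2 (u i, u j) (rk k) else set0.
have PA : forall i j k, Pi (A i j k).
  move=> i j k; rewrite /A; case: pselect => hb; last by left.
  by right; exists (u i, u j), (rk k); split.
have -> : U = \bigcup_k \bigcup_i \bigcup_j A i j k.
  apply/seteqP; split; last first.
    by move=> p [k _ [i _ [j _]]]; rewrite /A; case: pselect => [hb /hb //|nb []].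
  move=> p Up; have [r [r0 hr]] := oU p Up.
  have [k hk] : exists k, rk k < r.
    have r1 : 0 <= r^-1 by rewrite invr_ge0 ltW.
    have hb := archi_boundP r1.
    set m := Num.Def.archi_bound r^-1 in hb *.
    exists m.
    have h1 : m.+1%:R * rk m = 1 by rewrite /rk mulfV // pnatr_eq0.
    have h2 : r * r^-1 = 1 by rewrite mulfV // gt_eqF.
    have h3 : (m%:R : R) <= m.+1%:R by rewrite ler_nat.
    have h4 : r^-1 < m.+1%:R by lra.
    have h5 : 1 < r * m.+1%:R by rewrite -[X in X < _]h2 ltr_pM2l.
    have := rk0 m; nra.
  have [i hi] := hu p.1 (rk0 k).
  have [j hj] := hu p.2 (rk0 k).
  rewrite /distE in hi hj.
  exists k => //; exists i => //; exists j => //; rewrite /A; case: pselect => [hb|nb].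
    by apply/max_lt; rewrite !(nB ha hn (u _)); split.
  exfalso; apply: nb => q /max_lt [q1 q2]; apply: hr; apply/max_lt; split.
    by case: (n_tri' hn p.1 (u i) q.1) => h; lra.
  by case: (n_tri' hn p.2 (u j) q.2) => h; lra.
by apply: (sU) => k; apply: (sU) => i; apply: (sU) => j; apply: sub_sigma_algebra; exact: PA.
Qed.

Lemma borel2_Pi : mborel (distE2 n) `<=` <<s Pi>>.
Proof. apply: smallest_sub; [exact: smallest_sigma_algebra | exact: open_Pi]. Qed.

Lemma meas_class (d' : measure_display) (O' : measurableType d') (Z : O' -> E * E) :
  sigma_algebra setT [set C | measurable (Z @^-1` C)].
Proof.
split => /=; first exact: measurable0.
  by move=> A mA; exact: measurableD measurableT mA.
by move=> F mF; exact: bigcupT_measurable _ mF.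
Qed.

Lemma pair_meas (d' : measure_display) (O' : measurableType d') (Z1 Z2 : O' -> E) :
  rvE n Z1 -> rvE n Z2 -> forall C, mborel (distE2 n) C ->
  measurable ((fun w => (Z1 w, Z2 w)) @^-1` C).
Proof.
move=> h1 h2 C BC.
have h : <<s Pi>> `<=` [set C | measurable ((fun w => (Z1 w, Z2 w)) @^-1` C)].
  apply: smallest_sub; first exact: meas_class.
  move=> _ [->|[y [r [r0 ->]]]] /=; first exact: measurable0.
  have -> : (fun w => (Z1 w, Z2 w)) @^-1` ball2 y r =
      Z1 @^-1` ball1 y.1 r `&` Z2 @^-1` ball1 y.2 r.
    by apply/seteqP; split => w /=; [move/max_lt | move=> hw; apply/max_lt].
  by apply: measurableI; [apply: h1 | apply: h2]; exact: ball1_borel.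
exact: h (borel2_Pi BC).
Qed.

Let h (c : E) (r : R) := P (X @^-1` ball1 c r).
Let ex (c : E) (r : R) := exists g, G g /\ n (c - g) < r.
Let GB : mborel (distE n) G := compact_borel ha hn cG.

Lemma h_in c r : ex c r -> h c r = h 0 r.
Proof.
move=> [g [Gg hg]].
have r0 : 0 < r by have := n_ge0 hn (c - g); lra.
have gg : n (g - g) < r by rewrite subrr (n0 hn).
rewrite /h; have -> : ball1 c r = [set z | ball1 0 r (z - g)].
  apply/seteqP; split => z; rewrite /ball1 /= sub0r (nN ha hn) (nB ha hn z g) => hz.
    exact: (ball_nest hg gg (lexx r) hz).
  exact: (ball_nest gg hg (lexx r) hz).
by case: hH => _ inv; rewrite (inv g Gg _ (@ball1_borel 0 r)).
Qed.

Lemma h_out c r : ~ ex c r -> h c r = 0%E.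
Proof.
move=> nc; rewrite /h; apply/eqP; rewrite eq_le measure_ge0 andbT.
have PnG : P (X @^-1` (~` G)) = 0%E.
  rewrite preimage_setC probability_setC; last exact: hX.
  by case: hH => -> _; rewrite subee.
rewrite -PnG; apply: le_measure; rewrite ?inE.
- exact: hX (@ball1_borel c r).
- exact: hX (borelC GB).
- by move=> w /= hw GXw; apply: nc; exists (X w).
Qed.

Lemma hprod r c1 c2 : (h c1 r * h c2 r)%E =
  if `[< ex c1 r /\ ex c2 r >] then (h 0 r * h 0 r)%E else 0%E.
Proof.
case: asboolP => [[e1 e2]|ne]; first by rewrite (h_in e1) (h_in e2).
have [e1|e1] := pselect (ex c1 r).
  have e2 : ~ ex c2 r by move=> e2; apply: ne.
  by rewrite (h_out e2) mule0.
by rewrite (h_out e1) mul0e.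
Qed.

Lemma law_ball (d' : measure_display) (O' : measurableType d') (P' : probability O' R)
  (X1 X2 : O' -> E) : rvE n X1 -> rvE n X2 -> same_law n P X P' X1 ->
  same_law n P X P' X2 -> indepE n P' X1 X2 -> forall y r,
  P' ((fun w => (X1 w, X2 w)) @^-1` ball2 y r) = (h y.1 r * h y.2 r)%E.
Proof.
move=> h1 h2 s1 s2 ind y r.
have -> : (fun w => (X1 w, X2 w)) @^-1` ball2 y r =
    X1 @^-1` ball1 y.1 r `&` X2 @^-1` ball1 y.2 r.
  by apply/seteqP; split => w /=; [move/max_lt | move=> hw; apply/max_lt].
rewrite ind; try exact: ball1_borel.
by rewrite /h (s1 _ (ball1_borel _ _)) (s2 _ (ball1_borel _ _)).
Qed.

Lemma ex_M b11 b12 b21 b22 y r : a b11 <= 1 -> a b12 <= 1 -> a b21 <= 1 -> a b22 <= 1 ->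
  ex y.1 r -> ex y.2 r ->
  ex (Mf b11 b12 b21 b22 y).1 r /\ ex (Mf b11 b12 b21 b22 y).2 r.
Proof.
move=> k1 k2 k3 k4 [g1 [G1 e1]] [g2 [G2 e2]].
case: hG => _ Gadd Gsc.
have hd : distE2 n (Mf b11 b12 b21 b22 y) (Mf b11 b12 b21 b22 (g1, g2)) < r.
  rewrite Mf_dist; apply: le_lt_trans (Mf_le hn _ k1 k2 k3 k4) _.
  by apply/max_lt; split.
move/max_lt: hd => [d1 d2]; split.
  exists (Mf b11 b12 b21 b22 (g1, g2)).1; split => //=.
  by apply: Gadd; apply: Gsc.
exists (Mf b11 b12 b21 b22 (g1, g2)).2; split => //=.
by apply: Gadd; apply: Gsc.
Qed.

Lemma Mf_iso b11 b12 b21 b22 c11 c12 c21 c22 :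
  a b11 <= 1 -> a b12 <= 1 -> a b21 <= 1 -> a b22 <= 1 ->
  a c11 <= 1 -> a c12 <= 1 -> a c21 <= 1 -> a c22 <= 1 ->
  (forall p : E * E, Mf c11 c12 c21 c22 (Mf b11 b12 b21 b22 p) = p) ->
  forall p q, distE2 n (Mf b11 b12 b21 b22 p) (Mf b11 b12 b21 b22 q) = distE2 n p q.
Proof.
move=> k1 k2 k3 k4 l1 l2 l3 l4 inv p q; apply/eqP; rewrite eq_le; apply/andP; split.
  by rewrite Mf_dist; exact: (Mf_le hn _ k1 k2 k3 k4).
rewrite -{1}(inv p) -{1}(inv q) Mf_dist.
exact: (Mf_le hn _ l1 l2 l3 l4).
Qed.

Lemma gauss : K_gaussian a n P X.
Proof.
move=> d' O' P' X1 X2 hX1 hX2 s1 s2 ind a11 a12 a21 a22 orth C BC.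
have [c11 [c12 [c21 [c22 [[k1 k2 k3 k4] [l1 l2 l3 l4] inv1 inv2]]]]] :=
  orth_facts ha E orth.
pose Psi := fun w => (X1 w, X2 w).
pose M := @Mf K E a11 a12 a21 a22.
have PiL : Pi `<=` [set C | [/\ measurable ((M \o Psi) @^-1` C),
    measurable (Psi @^-1` C) & P' ((M \o Psi) @^-1` C) = P' (Psi @^-1` C)]].
  move=> _ [->|[y [r [r0 ->]]]] /=.
    by split; [exact: measurable0|exact: measurable0|].
  have e : forall w, distE2 n y (M (Psi w)) = distE2 n (Mf c11 c12 c21 c22 y) (Psi w).
    by move=> w; rewrite -{1}(inv2 y) (Mf_iso k1 k2 k3 k4 l1 l2 l3 l4 inv1).
  have eb : (M \o Psi) @^-1` ball2 y r = Psi @^-1` ball2 (Mf c11 c12 c21 c22 y) r.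
    by apply/seteqP; split => w; rewrite /ball2 /= e.
  rewrite eb; split.
  - by rewrite /Psi; apply: pair_meas hX1 hX2 _ _; apply: borel_open; exact: ball2_open.
  - by rewrite /Psi; apply: pair_meas hX1 hX2 _ _; apply: borel_open; exact: ball2_open.
  - rewrite /Psi (law_ball hX1 hX2 s1 s2 ind (Mf c11 c12 c21 c22 y) r).
    rewrite (law_ball hX1 hX2 s1 s2 ind y r).
    rewrite (hprod r (Mf c11 c12 c21 c22 y).1) (hprod r y.1).
    congr (if _ then _ else _).
    apply/idP/idP => /asboolP [e1 e2]; apply/asboolP.
      have := ex_M k1 k2 k3 k4 e1 e2; by rewrite inv2.
    exact: ex_M l1 l2 l3 l4 e1 e2.
have hL := lambda_system_subset Pi_setI (lam P' (M \o Psi) Psi) PiL.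
have [_ _ e] := hL (fun _ _ => subsetT _) C (borel2_Pi BC).
exact: e.
Qed.
End Gauss.

Unset Implicit Arguments. Set Strict Implicit.

Theorem theorem4p7 (R : realType) (K : fieldType) (a : K -> R)
  (E : lmodType K) (n : E -> R) (G : set E)
  (d : measure_display) (O : measurableType d) (P : probability O R) (X : O -> E) :
  local_field a ->
  banach a n -> mseparable (distE n) ->
  D_submodule a G -> mcompact (distE n) G ->
  rvE n X -> law_is_haar n P X G ->
  K_gaussian a n P X /\
  G = [set x | forall T : E -> K, dual_elt a n T ->
         ((a (T x))%:E <= ess_sup P (fun w => (a (T (X w)))%:E))%E].
Proof.
move=> hK [hn _] [u hu] hG cG hX hH.
split; first exact: (gauss hK hn hu hG cG hX hH).
apply/seteqP; split.
  by move=> x Gx T dT; exact: (ess_ge hK hn cG hX hH Gx dT).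
move=> x hx; apply: contrapT => nGx.
have [T [dT nle]] := sep hK hn hG cG hX hH nGx.
exact: nle (hx T dT).
Qed.
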